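(* For all integers $\ell\ge1$ and $N\ge2$ there exists an $(N,\ell)$-isolating family of size at most $2^\ell\log_2 N$.
   Context: For $m\in[N]=\{1,\dots,N\}$ and $S\subseteq[N]\setminus\{m\}$, a function $h:[N]\to\{0,1\}^\ell$ isolates $m$ from $S$ if $h(m)\notin\{h(m'):m'\in S\}$. A family $\{h_1,\dots,h_M\}$ of functions $[N]\to\{0,1\}^\ell$ is $(N,\ell)$-isolating if for every $S\subseteq[N]$ with $|S|\le 2^{\ell-1}$ and every $m\in[N]\setminus S$ there is $j\in[M]$ such that $h_j$ isolates $m$ from $S$. *)

(* Defs.v *)
From Stdlib Require Import Reals.
From mathcomp Require Import all_boot.
Set Implicit Arguments. Unset Strict Implicit. Unset Printing Implicit Defensive.

(* [N] = {1,..,N} is represented by 'I_N = {0,..,N-1};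
   {0,1}^l is represented by l.-tuple bool. *)

Definition isolates (N l : nat) (h : 'I_N -> l.-tuple bool)
  (m : 'I_N) (S : {set 'I_N}) : bool :=
  h m \notin (h @: S).

Definition isolating_family (N l M : nat)
  (hs : 'I_M -> 'I_N -> l.-tuple bool) : Prop :=
  forall (S : {set 'I_N}) (m : 'I_N),
    #|S| <= 2 ^ (l - 1) -> m \notin S ->
    exists j : 'I_M, isolates (hs j) m S.

Definition log2R (x : R) : R := Rdiv (ln x) (ln 2).

(* Main.v *)
Require Import Defs.
From Stdlib Require Import Reals Lra.
From mathcomp Require Import all_boot.


Lemma INR_expn m n : INR (m ^ n) = pow (INR m) n.
Proof.
elim: n => [//|n IH]; rewrite expnS /= -IH -mult_INR; congr INR.
Qed.

Lemma real_bound (M l N : nat) : (2 <= N)%N -> (2^M <= N^(2^l))%N ->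
  Rle (INR M) (Rmult (pow 2 l) (log2R (INR N))).
Proof.
move=> hN hM.
have HN : Rle 2 (INR N) by apply: (le_INR 2); apply/leP.
have H := le_INR _ _ (leP hM).
rewrite !INR_expn in H.
have ln2 : Rlt 0 (ln 2) by rewrite -ln_1; apply: ln_increasing; lra.
have Hl : Rle (ln (pow (INR 2) M)) (ln (pow (INR N) (2 ^ l))).
  case: (Rle_lt_or_eq_dec _ _ H) => [h|->]; last by apply: Rle_refl.
  apply: Rlt_le; apply: ln_increasing => //; apply: pow_lt; simpl; lra.
rewrite !ln_pow /= in Hl; try lra.
rewrite INR_expn /= in Hl.
rewrite /log2R.
apply: (Rmult_le_reg_r (ln 2)) => //.
have -> : Rmult (Rmult (pow 2 l) (Rdiv (ln (INR N)) (ln 2))) (ln 2) = Rmult (pow 2 l) (ln (INR N)).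
  by field; lra.
by [].
Qed.


Lemma bits_eq M a b : a < 2^M -> b < 2^M ->
  (forall j, j < M -> odd (a %/ 2^j) = odd (b %/ 2^j)) -> a = b.
Proof.
elim: M a b => [|M IH] a b ha hb H.
  by move: ha hb; rewrite expn0 !ltnS !leqn0 => /eqP-> /eqP->.
rewrite -(odd_double_half a) -(odd_double_half b).
have h0 := H 0 isT; rewrite !expn0 !divn1 in h0.
rewrite h0 (IH a./2 b./2) //.
- by rewrite -divn2 ltn_divLR // -expnSr.
- by rewrite -divn2 ltn_divLR // -expnSr.
move=> j hj; rewrite -!divn2 -!divnMA -expnS; exact: H.
Qed.

Lemma bitfam N (hN : 2 <= N) : exists M (hs : 'I_M -> 'I_N -> 1.-tuple bool),
  isolating_family hs /\ 2^M <= N^2.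
Proof.
set M := (trunc_log 2 N).+1.
exists M, (fun j x => [tuple odd (x %/ 2^j)]); split; last first.
  rewrite /M expnS.
  apply: (@leq_trans (2 * N)); first by rewrite leq_mul2l trunc_logP // ltnW.
  by rewrite expnS expn1 leq_mul2r hN orbT.
have hNM : N < 2^M by apply: trunc_log_ltn.
move=> S m hS hm.
have j0 : 'I_M by exact: ord0.
case: (set_0Vmem S) => [->|[m' hm']].
  by exists j0; rewrite /isolates imset0 inE.
have SE : S = [set m'].
  apply/setP => x; rewrite inE; move/card_le1P: hS => /(_ m' hm') ->.
  by rewrite inE.
case: (boolP [exists j : 'I_M, isolates (fun x : 'I_N => [tuple odd (x %/ 2^j)]) m S]).
  by move/existsP.
move/existsPn => H; exfalso.
have : val m = val m'.
  apply: (@bits_eq M); first exact: (leq_trans (ltn_ord m)) (ltnW hNM).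
    exact: (leq_trans (ltn_ord m')) (ltnW hNM).
  move=> j hj; have := H (Ordinal hj).
  rewrite /isolates SE imset_set1 inE negbK => /eqP/(congr1 (fun t => thead t)).
  by [].
move/val_inj => e; by move: hm; rewrite SE inE e eqxx.
Qed.


Lemma card_bigcup_le (I T : finType) (P : pred I) (F : I -> {set T}) :
  #|\bigcup_(i | P i) F i| <= \sum_(i | P i) #|F i|.
Proof.
elim/big_rec2: _ => [|i n U _ le]; first by rewrite cards0.
by rewrite (leq_trans (leq_card_setU _ _).1) ?leq_add2l.
Qed.

Lemma card_eq2 (N l : nat) (m m' : 'I_N) (c : l.-tuple bool) : m != m' ->
  #|[set h : {ffun 'I_N -> l.-tuple bool} | (h m == c) && (h m' == c)]|
  = (2^l)^(N-2).
Proof.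
move=> hmm.
pose F := fun x : 'I_N => if (x == m) || (x == m') then (pred1 c) else (@predT (l.-tuple bool)).
have -> : #|[set h : {ffun 'I_N -> l.-tuple bool} | (h m == c) && (h m' == c)]|
  = #|(family F : simpl_pred {ffun 'I_N -> l.-tuple bool})|.
  apply: eq_card => h; rewrite inE; apply/andP/familyP.
    move=> [/eqP h1 /eqP h2] x; rewrite /F; case: eqP => [->|_] /=.
      by rewrite inE h1.
    by case: eqP => [->|_] //=; rewrite inE h2.
  by move=> H; move: (H m) (H m'); rewrite /F !eqxx /= orbT !inE => -> ->.
rewrite card_family foldrE big_image /=.
rewrite (eq_bigr (fun x => if ~~ ((x == m) || (x == m')) then 2^l else 1)); last first.
  move=> x _; rewrite /F; case: ifP => _ /=; first exact: card1.
  by rewrite cardT -cardE card_tuple card_bool.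
rewrite -big_mkcondr /= prod_nat_const.
congr (_ ^ _).
have h := cardsC [set m; m']; rewrite cards2 hmm card_ord in h.
rewrite (_ : #|_| = #|~: [set m; m']|); first by rewrite -[in RHS]h addKn.
by apply: eq_card => x; rewrite !inE.
Qed.


Lemma count_pairs N k (Pairs : {set 'I_N * {set 'I_N}}) :
  (forall p, p \in Pairs -> (#|p.2| <= k) && (p.2 != set0)) ->
  #|Pairs| <= N * N^k.
Proof.
move=> HP.
pose g := fun (p : 'I_N * {ffun 'I_k -> 'I_N}) => (p.1, [set p.2 i | i : 'I_k]).
have sub : Pairs \subset [set g p | p in [set: 'I_N * {ffun 'I_k -> 'I_N}]].
  apply/subsetP => -[m S] /HP /= /andP[hS hne].
  case/set0Pn: hne => x0 hx0.
  apply/imsetP; exists (m, [ffun i : 'I_k => nth x0 (enum S) i]); first by rewrite inE.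
  rewrite /g /=; congr pair; apply/setP => y; apply/idP/imsetP.
    move=> hy.
    have hi : index y (enum S) < k.
      by rewrite (leq_trans _ hS) // cardE index_mem mem_enum.
    by exists (Ordinal hi) => //; rewrite ffunE nth_index // mem_enum.
  case=> i _ ->; rewrite ffunE.
  case: (ltnP i (size (enum S))) => hi; first by rewrite -mem_enum mem_nth.
  by rewrite nth_default.
apply: (leq_trans (subset_leq_card sub)).
apply: (leq_trans (leq_imset_card _ _)).
by rewrite cardsT card_prod card_ffun !card_ord.
Qed.


Lemma counting N l M : 1 <= l -> 2 <= N -> N * N^(2^(l-1)) < 2^M ->
  exists hs : 'I_M -> 'I_N -> l.-tuple bool, isolating_family hs.
Proof.
move=> hl hN hM.
set k := 2^(l-1).
pose T := {ffun 'I_N -> l.-tuple bool}.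
pose Pairs := [set p : 'I_N * {set 'I_N} | [&& p.1 \notin p.2, #|p.2| <= k & p.2 != set0]].
pose fail := fun (h : T) (p : 'I_N * {set 'I_N}) => h p.1 \in [set h x | x in p.2].
have M0 : 0 < M.
  case: M hM => // ; rewrite expn0 ltnS leqn0 muln_eq0 => /orP[/eqP N0|].
    by rewrite N0 in hN.
  by rewrite expn_eq0 => /andP[/eqP N0 _]; rewrite N0 in hN.
case: (boolP [exists hs : {ffun 'I_M -> T}, [forall p in Pairs, [exists j, ~~ fail (hs j) p]]]).
  case/existsP => hs /forall_inP H.
  exists (fun j x => hs j x) => S m hS hm.
  case: (set_0Vmem S) => [->|[x hx]].
    by exists (Ordinal M0); rewrite /isolates imset0 inE.
  have hp : (m, S) \in Pairs.
    by rewrite inE /= hm hS /=; apply/set0Pn; exists x.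
  by case/existsP: (H _ hp) => j hj; exists j.
move/existsPn => H; exfalso.
pose A := fun p => [set h : T | fail h p].
pose B := fun p => [set hs : {ffun 'I_M -> T} | [forall j, fail (hs j) p]].
have cover : [set: {ffun 'I_M -> T}] \subset \bigcup_(p in Pairs) B p.
  apply/subsetP => hs _; have := H hs.
  case/forall_inPn => p hp; rewrite negb_exists => /forallP hj.
  apply/bigcupP; exists p => //; rewrite inE; apply/forallP => j.
  by have := hj j; rewrite negbK.
have cardB p : #|B p| = #|A p| ^ M.
  rewrite -[in RHS](card_ord M) -card_ffun_on; apply: eq_card => hs.
  rewrite inE; apply/forallP/ffun_onP => Hj j; have := Hj j; by rewrite !inE.
have cardTT : #|T| = (2^l)^N by rewrite card_ffun card_tuple card_bool card_ord.
have cardA p : p \in Pairs -> #|A p| * 2 <= #|T|.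
  case: p => m S; rewrite inE /= => /and3P[hm hS _].
  have sub : A (m, S) \subset \bigcup_(m' in S) \bigcup_(c : l.-tuple bool)
      [set h : T | (h m == c) && (h m' == c)].
    apply/subsetP => h; rewrite inE /fail /= => /imsetP[m' hm' e].
    apply/bigcupP; exists m' => //; apply/bigcupP; exists (h m) => //.
    by rewrite inE eqxx -e eqxx.
  have le1 := leq_trans (subset_leq_card sub) (card_bigcup_le _ _ _ _).
  have le2 : \sum_(m' in S) #|\bigcup_(c : l.-tuple bool)
      [set h : T | (h m == c) && (h m' == c)]| <= \sum_(m' in S) (2^l * (2^l)^(N-2)).
    apply: leq_sum => m' hm'.
    apply: (leq_trans (card_bigcup_le _ _ _ _)).
    have nm : m != m' by apply: contraNneq hm => ->.
    rewrite (eq_bigr (fun _ => (2^l)^(N-2))); last by move=> c _; apply: card_eq2.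
    by rewrite sum_nat_const cardT -cardE card_tuple card_bool.
  rewrite sum_nat_const in le2.
  have le3 := leq_trans le1 le2.
  rewrite cardTT.
  apply: (leq_trans (leq_mul le3 (leqnn 2))).
  have e1 : 2^(l-1) * 2 = 2^l by rewrite -expnSr subn1 prednK.
  rewrite -[in X in _ <= X](subnK hN) addn2 !expnS mulnAC.
  by apply: leq_mul => //; rewrite -e1 leq_mul2r hS orbT.
have h1 : #|T|^M <= \sum_(p in Pairs) #|A p|^M.
  rewrite -{1}(card_ord M) -card_ffun -cardsT.
  apply: (leq_trans (subset_leq_card cover)).
  apply: (leq_trans (card_bigcup_le _ _ _ _)).
  by rewrite (eq_bigr _ (fun p _ => cardB p)).
have h2 : (\sum_(p in Pairs) #|A p|^M) * 2^M <= #|Pairs| * #|T|^M.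
  rewrite big_distrl /= -sum_nat_const; apply: leq_sum => p hp.
  by rewrite -expnMn leq_exp2r //; apply: cardA.
have h3 : #|Pairs| < 2^M.
  apply: leq_ltn_trans hM; apply: count_pairs => p.
  by rewrite inE => /and3P[_ -> ->].
have hT : 0 < #|T|^M by rewrite cardTT -!expnM expn_gt0.
have h := leq_trans (leq_mul h1 (leqnn (2^M))) h2.
rewrite mulnC in h.
have := leq_ltn_trans h (_ : _ < 2^M * #|T|^M); rewrite ?ltnn //.
move=> H0; suff : false by []. by apply: H0; rewrite ltn_pmul2r.
Qed.


Theorem mainTheorem10 (l N : nat) (hl : 1 <= l) (hN : 2 <= N) :
  exists (M : nat) (hs : 'I_M -> 'I_N -> l.-tuple bool),
    isolating_family hs /\
    Rle (INR M) (Rmult (pow 2 l) (log2R (INR N))).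
Proof.
case: l hl => [//|[|l']] _.
  have [M [hs [H1 H2]]] := bitfam N hN.
  by exists M, hs; split => //; apply: real_bound.
set l := l'.+2.
set k := 2^(l-1).
set M := (trunc_log 2 (N * N^k)).+1.
have hM : N * N^k < 2^M by apply: trunc_log_ltn.
have [hs H] := @counting N l M isT hN hM.
exists M, hs; split => //; apply: real_bound => //.
have hk : 2 <= k by rewrite /k /l subn1 /= (@leq_trans (2^1)) // leq_exp2l.
have e : 2^l = k + k by rewrite /k /l subn1 /= expnS mul2n addnn.
rewrite e expnD /M expnS.
have hpos : 0 < N * N ^ k by rewrite muln_gt0 expn_gt0 ltnW.
apply: (@leq_trans (2 * (N * N^k))).
  by rewrite leq_mul2l trunc_logP.
rewrite mulnA mulnC leq_mul2l; apply/orP; right.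
apply: (@leq_trans (N^2)); first by rewrite [2 * N]mulnC expnS expn1 leq_mul2l hN orbT.
by rewrite leq_exp2l.
Qed.
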